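(* Let $S$ be a finite set, let $\mathcal{G}\subseteq 2^S$ be connected, and let $\mathcal{C}\subseteq\mathcal{G}$ satisfy $|\mathcal{C}|\neq|\chi(\mathcal{C})|$. Then there exist $X,X'\in\mathcal{C}$ with $(-1)^{|X|}\neq(-1)^{|X'|}$ and a simple path $X=X_0 - X_1 - \cdots - X_{n+1}=X'$ in $G_S$ all of whose nodes lie in $\mathcal{G}$, such that $X_i\notin\mathcal{C}$ for $1\le i\le n$.
   Context: An adjacent pair of $2^S$ is a set $\{X,X\setminus\{x\}\}$ with $X\subseteq S$, $x\in X$. $G_S$ is the undirected graph on vertex set $2^S$ whose edges are the adjacent pairs; $\mathcal{G}\subseteq 2^S$ is connected if it induces a connected subgraph of $G_S$. For a family $\mathcal{D}$ of finite sets, $\chi(\mathcal{D})=\sum_{Y\in\mathcal{D}}(-1)^{|Y|}$. *)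

(* Defs.v *)
(* The finite ground set S is a finType T; 2^S is {set T}. *)
From mathcomp Require Import all_boot all_order all_algebra.
Set Implicit Arguments. Unset Strict Implicit. Unset Printing Implicit Defensive.
Import GRing.Theory Num.Theory.

(* {X, Y} is an adjacent pair: one is obtained from the other by removing
   one of its elements.  This is the edge relation of G_S. *)
Definition adjacent (T : finType) (X Y : {set T}) : bool :=
  [exists x, (x \in X) && (Y == X :\ x)] ||
  [exists x, (x \in Y) && (X == Y :\ x)].

Definition connected_family (T : finType) (G : {set {set T}}) : Prop :=
  forall X Y, X \in G -> Y \in G ->
    exists p : seq {set T},
      [/\ path (@adjacent T) X p, last X p = Y & all (fun Z => Z \in G) p].

Definition chi (T : finType) (D : {set {set T}}) : int :=
  (\sum_(Y in D) (-1) ^+ #|Y|)%R.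

(* Main.v *)
Require Import Defs.
From mathcomp Require Import all_boot all_order all_algebra.
Import GRing.Theory Num.Theory.

Lemma walk_aux (T : finType) (G C : {set {set T}}) (p : seq {set T}) :
  forall (X : {set T}) (q0 : seq {set T}),
  X \in C -> all (fun Z => Z \notin C) q0 ->
  path (@adjacent T) X (q0 ++ p) -> all (fun Z => Z \in G) (X :: q0 ++ p) ->
  last X (q0 ++ p) \in C ->
  ((-1) ^+ #|X| != (-1) ^+ #|last X (q0 ++ p)| :> int)%R ->
  exists X1 Y q, [/\ X1 \in C, Y \in C,
      ((-1) ^+ #|X1| != (-1) ^+ #|Y| :> int)%R,
      path (@adjacent T) X1 (rcons q Y) &
      all (fun Z => Z \in G) (X1 :: rcons q Y) && all (fun Z => Z \notin C) q].
Proof.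
elim: p => [|Y p2 IH] X q0 XC q0C pa aG lC par.
  rewrite cats0 in lC par.
  case: q0 q0C lC par {pa aG} => [|z q] q0C lC par; first by rewrite eqxx in par.
  have : last z q \in z :: q by exact: mem_last.
  by move/(allP q0C); rewrite lC.
case YC: (Y \in C).
  case: (eqVneq ((-1) ^+ #|X| : int)%R ((-1) ^+ #|Y|)%R) => pXY.
    have := IH Y [::] YC isT.
    rewrite /= last_cat /= in lC par *.
    move: pa; rewrite cat_path /= => /and3P[_ _ pa2].
    move: aG; rewrite /= all_cat /= => /and4P[_ _ YG aG2].
    rewrite pXY in par.
    by move=> /(_ pa2); rewrite YG aG2 => /(_ isT lC par).
  exists X, Y, q0; split => //.
    move: pa; rewrite cat_path -cats1 cat_path /= => /and3P[-> -> _] //.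
  rewrite q0C andbT /= -cats1 all_cat /= andbT; move: aG; rewrite /= all_cat /= => /and4P[-> -> -> _].
  by [].
have := IH X (rcons q0 Y) XC.
rewrite cat_rcons; apply => //.
by rewrite -cats1 all_cat q0C /= YC.
Qed.

Lemma interior (T : eqType) (X : T) p (P : pred T) :
  uniq (X :: p) -> {subset p <= [pred z | (z == last X p) || P z]} ->
  all P (behead (belast X p)).
Proof.
case: p => [|y q] //; rewrite [uniq (X :: _)]cons_uniq => /andP[_ u] sub /=.
apply/allP => z zb.
have zyq : z \in y :: q by exact: mem_belast.
move: (sub z zyq) => /orP[/eqP ez|] //.
move: u; rewrite lastI rcons_uniq => /andP[/negP nb _].
by case: nb; move: ez => /= <-.
Qed.

Theorem lemma6p9 (T : finType) (G C : {set {set T}}) :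
  connected_family G -> C \subset G ->
  (#|C|%:Z != `|chi C|)%R ->
  exists X X' : {set T}, exists p : seq {set T},
    [/\ X \in C, X' \in C,
        ((-1) ^+ #|X| != (-1) ^+ #|X'| :> int)%R,
        [/\ path (@adjacent T) X p, last X p = X', uniq (X :: p)
          & all (fun Z => Z \in G) (X :: p)]
      & all (fun Z => Z \notin C) (behead (belast X p))].
Proof.
move=> conn sCG neq.
have [A [B [AC BC pAB]]] : exists A B, [/\ A \in C, B \in C &
    ((-1) ^+ #|A| != (-1) ^+ #|B| :> int)%R].
  case: (boolP [exists A in C, exists B in C, ((-1) ^+ #|A| != (-1) ^+ #|B| :> int)%R]).
    by move=> /exists_inP[A AC /exists_inP[B BC pAB]]; exists A, B.
  rewrite negb_exists_in => /forall_inP H; suff E : (#|C|%:Z = `|chi C|)%R by rewrite E eqxx in neq.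
  apply/eqP.
  case: (set_0Vmem C) => [->|[A AC]]; first by rewrite cards0 /chi big_set0.
  rewrite /chi (eq_bigr (fun _ => ((-1) ^+ #|A|)%R : int)).
    by rewrite sumr_const normrMn normrX normrN1 expr1n natz.
  move=> Y YC; apply/eqP; rewrite eq_sym; apply/negPn/negP => nn.
  by move: (H A AC); rewrite negb_exists_in => /forall_inP /(_ Y YC); rewrite nn.
have [p [pa lp ap]] := conn A B (subsetP sCG _ AC) (subsetP sCG _ BC).
have := @walk_aux T G C p A [::] AC isT pa.
rewrite /= (subsetP sCG _ AC) ap lp => /(_ isT BC pAB).
move=> [X1 [Y [q [X1C YC par pa1 /andP[aG nq]]]]].
have lq : last X1 (rcons q Y) = Y by rewrite last_rcons.
move: lq; case/shortenP: pa1 => p' pa' u' sub' lp'.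
exists X1, Y, p'; split => //; first split => //.
  move: aG => /= /andP[-> aG]; apply/allP => z /sub' zin.
  exact: (allP aG).
apply: interior => // z /sub' zin; rewrite /= lp'.
move: zin; rewrite -cats1 mem_cat => /orP[zq|].
  by apply/orP; right; exact: (allP nq z zq).
by rewrite mem_seq1 => /eqP ->; apply/orP; left.
Qed.
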